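(* Let $E$ be an $\mathbb{R}$-group, $X$ a locally compact (Hausdorff) space not reduced to one point, and $\mathcal{H}=(H_\varepsilon)_{\varepsilon\in E}$ a continuous absorptive action of $E$ on $X$ with center $\omega$. Then $\omega$ has a countable neighbourhood base consisting of compact elementary sets, and also a countable neighbourhood base consisting of open elementary sets.
   Context: An $\mathbb{R}$-group is an abelian group $E$ (operation written multiplicatively) whose underlying set is a subset of $\mathbb{R}$ containing all positive integers, such that: (RG1) with the natural order of $\mathbb{R}$, $E$ is a totally ordered group; (RG2) with the topology induced from $\mathbb{R}$, $E$ is a locally compact group; (RG3) there is a nonconstant continuous homomorphism $h:E\to\mathbb{R}_+^*$ such that for every $\alpha\in E$ the set $\{\varepsilon\in E:\varepsilon\ge\alpha\}$ is integrable for $h\cdot m$, $m$ a Haar measure on $E$. $e$ is the identity of $E$, $\varepsilon^{-1}$ the group inverse; inequalities refer to the order of $\mathbb{R}$. An action of $E$ on $X$ is a family $(H_\varepsilon)_{\varepsilon\in E}$ of bijections of $X$ with $H_\varepsilon\circ H_{\varepsilon'}=H_{\varepsilon\varepsilon'}$, $H_e=\mathrm{id}_X$; continuous if $(\varepsilon,x)\mapsto H_\varepsilon(x)$ is continuous on $E\times X$; absorptive if some $\omega\in X$ satisfies (ABS): for every neighbourhood $V$ of $\omega$ and every $x\in X$ there are a neighbourhood $U$ of $x$ and $\alpha\in E$ with $H_{\varepsilon^{-1}}(U)\subset V$ for all $\varepsilon\le\alpha$; this $\omega$ is unique and called the center. A set $T\subset X$ is balanced if $H_{\varepsilon^{-1}}(T)\subset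 T$ for all $\varepsilon\le e$; it is elementary if it is a balanced relatively compact neighbourhood of $\omega$. *)

(* Defs.v *)
From Stdlib Require Import Reals List.
From Stdlib Require Export Rtopology.
Open Scope R_scope.

Definition cont_on (E : R -> Prop) (f : R -> R) : Prop :=
  forall x, E x -> forall eps, eps > 0 -> exists delta, delta > 0 /\
    forall y, E y -> Rabs (y - x) < delta -> Rabs (f y - f x) < eps.

(* compactly supported continuous functions on E; values off E are irrelevant *)
Definition Cc (E : R -> Prop) (f : R -> R) : Prop :=
  cont_on E f /\
  exists K : R -> Prop, compact K /\ (forall x, K x -> E x) /\
    (forall x, E x -> ~ K x -> f x = 0).

Definition abelian_group_on (E : R -> Prop) (mul : R -> R -> R) (inv : R -> R) (e : R) : Prop :=
  E e /\
  (forall x y, E x -> E y -> E (mul x y)) /\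
  (forall x, E x -> E (inv x)) /\
  (forall x y z, E x -> E y -> E z -> mul (mul x y) z = mul x (mul y z)) /\
  (forall x y, E x -> E y -> mul x y = mul y x) /\
  (forall x, E x -> mul e x = x) /\
  (forall x, E x -> mul (inv x) x = e).

Definition RG1 (E : R -> Prop) (mul : R -> R -> R) : Prop :=
  forall x y z, E x -> E y -> E z -> x <= y -> mul x z <= mul y z.

Definition RG2 (E : R -> Prop) (mul : R -> R -> R) (inv : R -> R) : Prop :=
  (forall x y, E x -> E y -> forall eps, eps > 0 -> exists delta, delta > 0 /\
     forall x' y', E x' -> E y' -> Rabs (x' - x) < delta -> Rabs (y' - y) < delta ->
       Rabs (mul x' y' - mul x y) < eps) /\
  cont_on E inv /\
  (forall x, E x -> exists K : R -> Prop, compact K /\ (forall y, K y -> E y) /\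
     exists delta, delta > 0 /\ forall y, E y -> Rabs (y - x) < delta -> K y).

(* I is (the integral against) a Haar measure on E: a nonzero, positive,
   translation-invariant linear functional on Cc(E) (Riesz / Bourbaki). *)
Definition haar_functional (E : R -> Prop) (mul : R -> R -> R) (I : (R -> R) -> R) : Prop :=
  (forall f g, Cc E f -> (forall x, E x -> f x = g x) -> I f = I g) /\
  (forall f g, Cc E f -> Cc E g -> I (fun x => f x + g x) = I f + I g) /\
  (forall c f, Cc E f -> I (fun x => c * f x) = c * I f) /\
  (forall f, Cc E f -> (forall x, E x -> 0 <= f x) -> 0 <= I f) /\
  (exists f, Cc E f /\ I f <> 0) /\
  (forall a f, E a -> Cc E f -> I (fun x => f (mul a x)) = I f).

(* The closed set S of E is integrable for the measure h.m (h > 0 continuous)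
   iff the upper integral of 1_S h is finite; by outer regularity this means:
   some open U of E containing S has finite (h.m)-measure, i.e. the integrals
   I(phi h), phi in Cc(E), 0 <= phi <= 1_U, are bounded. *)
Definition integrable_hm (E : R -> Prop) (I : (R -> R) -> R) (h : R -> R)
  (S : R -> Prop) : Prop :=
  exists U : R -> Prop,
    (forall x, E x -> U x -> exists delta, delta > 0 /\
        forall y, E y -> Rabs (y - x) < delta -> U y) /\
    (forall x, E x -> S x -> U x) /\
    exists M, forall phi, Cc E phi ->
      (forall x, E x -> 0 <= phi x <= 1) ->
      (forall x, E x -> ~ U x -> phi x = 0) ->
      I (fun x => phi x * h x) <= M.

Definition RG3 (E : R -> Prop) (mul : R -> R -> R) : Prop :=
  exists h : R -> R,
    cont_on E h /\ (forall x, E x -> 0 < h x) /\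
    (forall x y, E x -> E y -> h (mul x y) = h x * h y) /\
    (exists x y, E x /\ E y /\ h x <> h y) /\
    exists I, haar_functional E mul I /\
      forall alpha, E alpha -> integrable_hm E I h (fun eps => E eps /\ eps >= alpha).

Definition R_group (E : R -> Prop) (mul : R -> R -> R) (inv : R -> R) (e : R) : Prop :=
  (forall n : nat, (1 <= n)%nat -> E (INR n)) /\
  abelian_group_on E mul inv e /\ RG1 E mul /\ RG2 E mul inv /\ RG3 E mul.

Definition is_topology {X : Type} (open : (X -> Prop) -> Prop) : Prop :=
  open (fun _ => True) /\
  (forall U V, open U -> open V -> open (fun x => U x /\ V x)) /\
  (forall F : (X -> Prop) -> Prop, (forall U, F U -> open U) ->
     open (fun x => exists U, F U /\ U x)).

Definition nbhd {X : Type} (open : (X -> Prop) -> Prop) (x : X) (V : X -> Prop) : Prop :=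
  exists O, open O /\ O x /\ forall y, O y -> V y.

Definition compact_in {X : Type} (open : (X -> Prop) -> Prop) (K : X -> Prop) : Prop :=
  forall F : (X -> Prop) -> Prop, (forall U, F U -> open U) ->
    (forall x, K x -> exists U, F U /\ U x) ->
    exists l : list (X -> Prop), (forall U, In U l -> F U) /\
      (forall x, K x -> exists U, In U l /\ U x).

Definition closure {X : Type} (open : (X -> Prop) -> Prop) (T : X -> Prop) : X -> Prop :=
  fun x => forall U, open U -> U x -> exists y, U y /\ T y.

Definition hausdorff {X : Type} (open : (X -> Prop) -> Prop) : Prop :=
  forall x y : X, x <> y -> exists U V, open U /\ open V /\ U x /\ V y /\
    forall z, ~ (U z /\ V z).

Definition locally_compact {X : Type} (open : (X -> Prop) -> Prop) : Prop :=
  forall x : X, exists K, compact_in open K /\ nbhd open x K.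

Definition action (E : R -> Prop) (mul : R -> R -> R) (e : R) {X : Type}
  (H : R -> X -> X) : Prop :=
  (forall eps, E eps -> (forall x y, H eps x = H eps y -> x = y) /\
                        (forall y, exists x, H eps x = y)) /\
  (forall eps eps' x, E eps -> E eps' -> H eps (H eps' x) = H (mul eps eps') x) /\
  (forall x, H e x = x).

Definition continuous_action (E : R -> Prop) {X : Type} (open : (X -> Prop) -> Prop)
  (H : R -> X -> X) : Prop :=
  forall eps x W, E eps -> open W -> W (H eps x) ->
    exists delta U, delta > 0 /\ open U /\ U x /\
      forall eps' x', E eps' -> Rabs (eps' - eps) < delta -> U x' -> W (H eps' x').

Definition ABS (E : R -> Prop) (inv : R -> R) {X : Type} (open : (X -> Prop) -> Prop)
  (H : R -> X -> X) (omega : X) : Prop :=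
  forall V x, nbhd open omega V ->
    exists U alpha, nbhd open x U /\ E alpha /\
      forall eps, E eps -> eps <= alpha -> forall y, U y -> V (H (inv eps) y).

Definition balanced (E : R -> Prop) (inv : R -> R) (e : R) {X : Type}
  (H : R -> X -> X) (T : X -> Prop) : Prop :=
  forall eps, E eps -> eps <= e -> forall x, T x -> T (H (inv eps) x).

Definition elementary (E : R -> Prop) (inv : R -> R) (e : R) {X : Type}
  (open : (X -> Prop) -> Prop) (H : R -> X -> X) (omega : X) (T : X -> Prop) : Prop :=
  balanced E inv e H T /\ compact_in open (closure open T) /\ nbhd open omega T.

(* Main.v *)
Require Import Defs.
From Stdlib Require Import Reals.
From Stdlib Require Import Lra List Classical ClassicalEpsilon FunctionalExtensionality PropExtensionality.
Open Scope R_scope.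

Lemma open_ext {X : Type} (open : (X -> Prop) -> Prop) (A B : X -> Prop) :
  open A -> (forall x, A x <-> B x) -> open B.
Proof.
  intros HA Hx. replace B with A; auto.
  apply functional_extensionality; intro x; apply propositional_extensionality; auto.
Qed.

Lemma open_union {X : Type} (open : (X -> Prop) -> Prop) (Htop : is_topology open)
  (P : X -> Prop) :
  (forall x, P x -> exists U, open U /\ U x /\ forall z, U z -> P z) -> open P.
Proof.
  intros HP. destruct Htop as [_ [_ Hu]].
  apply open_ext with (fun x => exists U, (open U /\ forall z, U z -> P z) /\ U x).
  - apply Hu. intros U [H1 _]; exact H1.
  - intros x; split.
    + intros [U [[_ HU] Ux]]. auto.
    + intros Px. destruct (HP x Px) as [U [HUo [Ux HUP]]]. exists U; auto.
Qed.

Lemma preimage_open (E : R -> Prop) {X : Type} (open : (X -> Prop) -> Prop)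
  (Htop : is_topology open) (H : R -> X -> X) (Hc : continuous_action E open H)
  (a : R) (W : X -> Prop) : E a -> open W -> open (fun x => W (H a x)).
Proof.
  intros Ea HW. apply open_union; auto. intros x Wx.
  destruct (Hc a x W Ea HW Wx) as [d [U [dpos [HU [Ux HUW]]]]].
  exists U; split; [|split]; auto. intros z Uz. apply HUW; auto.
  replace (a - a) with 0 by ring. rewrite Rabs_R0; lra.
Qed.

Lemma closure_incl {X : Type} (open : (X -> Prop) -> Prop) (T : X -> Prop) x :
  T x -> closure open T x.
Proof. intros Tx U _ Ux. exists x; auto. Qed.

Lemma closure_mono {X : Type} (open : (X -> Prop) -> Prop) (A B : X -> Prop) x :
  (forall y, A y -> B y) -> closure open A x -> closure open B x.
Proof.
  intros HAB Hc U HU Ux. destruct (Hc U HU Ux) as [y [Uy Ay]]. exists y; auto.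
Qed.

Lemma closure_closure {X : Type} (open : (X -> Prop) -> Prop) (T : X -> Prop) x :
  closure open (closure open T) x -> closure open T x.
Proof.
  intros Hc U HU Ux. destruct (Hc U HU Ux) as [y [Uy Cy]]. apply (Cy U HU Uy).
Qed.

Lemma closure_pre (E : R -> Prop) {X : Type} (open : (X -> Prop) -> Prop)
  (Htop : is_topology open) (H : R -> X -> X) (Hc : continuous_action E open H)
  (a : R) (T : X -> Prop) x : E a ->
  closure open (fun z => T (H a z)) x -> closure open T (H a x).
Proof.
  intros Ea Hcl U HU Ux.
  destruct (Hcl (fun z => U (H a z)) (preimage_open E open Htop H Hc a U Ea HU) Ux)
    as [y [Uy Ty]].
  exists (H a y); auto.
Qed.

Lemma closure_balanced (E : R -> Prop) (inv : R -> R) (e : R) {X : Type}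
  (open : (X -> Prop) -> Prop)
  (Htop : is_topology open) (H : R -> X -> X) (Hc : continuous_action E open H)
  (Einv : forall x, E x -> E (inv x)) (T : X -> Prop) :
  balanced E inv e H T -> balanced E inv e H (closure open T).
Proof.
  intros Hb eps Eeps Hle x Hcl U HU Ux.
  destruct (Hcl (fun z => U (H (inv eps) z))
              (preimage_open E open Htop H Hc (inv eps) U (Einv _ Eeps) HU) Ux)
    as [y [Uy Ty]].
  exists (H (inv eps) y); split; auto.
Qed.

Lemma sep_list {X : Type} (open : (X -> Prop) -> Prop) (Htop : is_topology open) (x : X) :
  forall l : list (X -> Prop),
  (forall U, In U l -> exists V, open V /\ V x /\ forall z, ~ (U z /\ V z)) ->
  exists W, open W /\ W x /\ forall U, In U l -> forall z, ~ (U z /\ W z).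
Proof.
  induction l as [|U l IH]; intros Hl.
  - exists (fun _ => True). destruct Htop as [HT _]. split; auto.
  - destruct IH as [W [HW [Wx HWl]]].
    { intros U' HU'. apply Hl. right; auto. }
    destruct (Hl U (or_introl eq_refl)) as [V [HV [Vx HUV]]].
    exists (fun z => V z /\ W z). destruct Htop as [_ [Hi _]].
    split; [apply Hi; auto|]. split; [auto|].
    intros U' [<-|HU'] z [Hz1 [Hz2 Hz3]].
    + apply (HUV z); auto.
    + apply (HWl U' HU' z); auto.
Qed.

Lemma compact_closed {X : Type} (open : (X -> Prop) -> Prop) (Htop : is_topology open)
  (Hhaus : hausdorff open) (K : X -> Prop) :
  compact_in open K -> forall x, closure open K x -> K x.
Proof.
  intros HK x Hcl. apply NNPP; intro nKx.
  set (F := fun U => open U /\ exists V, open V /\ V x /\ forall z, ~ (U z /\ V z)).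
  destruct (HK F) as [l [Hl Hcov]].
  - intros U [HU _]; exact HU.
  - intros y Ky. assert (y <> x) by (intro; subst; auto).
    destruct (Hhaus y x H) as [U [V [HU [HV [Uy [Vx HUV]]]]]].
    exists U; split; auto. split; auto. exists V; auto.
  - destruct (sep_list open Htop x l) as [W [HW [Wx HWl]]].
    { intros U HU. destruct (Hl U HU) as [_ HV]. exact HV. }
    destruct (Hcl W HW Wx) as [y [Wy Ky]].
    destruct (Hcov y Ky) as [U [HU Uy]].
    apply (HWl U HU y); auto.
Qed.

Lemma filter_list {X : Type} (F : (X -> Prop) -> Prop) (C : X -> Prop) :
  forall l, (forall U, In U l -> F U \/ U = C) ->
  exists l', (forall U, In U l' -> F U) /\
    forall x, ~ C x -> (exists U, In U l /\ U x) -> exists U, In U l' /\ U x.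
Proof.
  induction l as [|U l IH]; intros Hl.
  - exists nil. split; [intros U []|]. intros x _ [U [[] _]].
  - destruct IH as [l' [Hl' Hcov]]. { intros U' HU'; apply Hl; right; auto. }
    destruct (Hl U (or_introl eq_refl)) as [FU|UC].
    + exists (U :: l'). split.
      * intros U' [<-|HU']; auto.
      * intros x nC [U' [[<-|HU'] Ux]].
        -- exists U; split; [left|]; auto.
        -- destruct (Hcov x nC) as [U'' [H1 H2]]; [exists U'; auto|].
           exists U''; split; [right|]; auto.
    + exists l'. split; auto.
      intros x nC [U' [[<-|HU'] Ux]].
      * subst. contradiction.
      * apply Hcov; auto. exists U'; auto.
Qed.

Lemma closure_sub_compact {X : Type} (open : (X -> Prop) -> Prop) (Htop : is_topology open)
  (K T : X -> Prop) :
  compact_in open K -> (forall x, closure open T x -> K x) -> compact_in open (closure open T).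
Proof.
  intros HK HTK F HF Hcov.
  set (C := fun x => exists U, open U /\ U x /\ forall y, U y -> ~ T y).
  assert (HCo : open C).
  { apply open_union; auto. intros x [U [HU [Ux HUT]]]. exists U; split; auto.
    split; auto. intros z Uz. exists U; auto. }
  assert (HCT : forall x, closure open T x -> ~ C x).
  { intros x Hcl [U [HU [Ux HUT]]]. destruct (Hcl U HU Ux) as [y [Uy Ty]].
    apply (HUT y); auto. }
  destruct (HK (fun U => F U \/ U = C)) as [l [Hl Hlcov]].
  - intros U [FU| ->]; auto.
  - intros x Kx. destruct (classic (C x)) as [Cx|nCx].
    + exists C; auto.
    + assert (Hcl : closure open T x).
      { intros U HU Ux. apply NNPP; intro Hn. apply nCx. exists U; split; auto.
        split; auto. intros y Uy Ty. apply Hn. exists y; auto. }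
      destruct (Hcov x Hcl) as [U [FU Ux]]. exists U; auto.
  - destruct (filter_list F C l Hl) as [l' [Hl' Hc']].
    exists l'. split; [auto|]. intros x Hcl. apply Hc'.
    + apply HCT; auto.
    + apply Hlcov. apply HTK; auto.
Qed.

Section G.
End G.

Lemma g_mulr1 E mul inv e (G : abelian_group_on E mul inv e) x : E x -> mul x e = x.
Proof.
  destruct G as [Ee [Em [Ei [Ha [Hc [H1 Hv]]]]]]. intros Ex.
  rewrite Hc; auto.
Qed.

Lemma g_mulrV E mul inv e (G : abelian_group_on E mul inv e) x : E x -> mul x (inv x) = e.
Proof.
  destruct G as [Ee [Em [Ei [Ha [Hc [H1 Hv]]]]]]. intros Ex.
  rewrite Hc; auto.
Qed.

Lemma g_inv_uniq E mul inv e (G : abelian_group_on E mul inv e) x y :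
  E x -> E y -> mul x y = e -> y = inv x.
Proof.
  pose proof (g_mulr1 E mul inv e G) as Hr1.
  destruct G as [Ee [Em [Ei [Ha [Hc [H1 Hv]]]]]]. intros Ex Ey Hxy.
  rewrite <- (H1 y) by auto. rewrite <- (Hv x) by auto.
  rewrite Ha by auto. rewrite Hxy. apply Hr1; auto.
Qed.

Lemma g_invK E mul inv e (G : abelian_group_on E mul inv e) x : E x -> inv (inv x) = x.
Proof.
  intros Ex. pose proof G as G'.
  destruct G' as [Ee [Em [Ei [Ha [Hc [H1 Hv]]]]]].
  symmetry. apply (g_inv_uniq E mul inv e G); auto.
Qed.

Lemma g_invM E mul inv e (G : abelian_group_on E mul inv e) x y :
  E x -> E y -> inv (mul x y) = mul (inv x) (inv y).
Proof.
  intros Ex Ey. pose proof (g_mulrV E mul inv e G) as HV.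
  pose proof (g_mulr1 E mul inv e G) as Hr1.
  pose proof G as G'.
  destruct G' as [Ee [Em [Ei [Ha [Hc [H1 Hv]]]]]].
  symmetry. apply (g_inv_uniq E mul inv e G); auto.
  rewrite Ha by auto.
  rewrite <- (Ha y (inv x) (inv y)) by auto.
  rewrite (Hc y (inv x)) by auto.
  rewrite (Ha (inv x) y (inv y)) by auto.
  rewrite HV by auto. rewrite Hr1 by auto. apply HV; auto.
Qed.

Lemma H_inv_l E mul inv e (G : abelian_group_on E mul inv e) {X : Type} (H : R -> X -> X)
  (Hact : action E mul e H) eps x : E eps -> H (inv eps) (H eps x) = x.
Proof.
  intros Ee. pose proof G as G'.
  destruct G' as [E0 [Em [Ei [Ha [Hc [H1 Hv]]]]]].
  destruct Hact as [_ [Hcomp He]].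
  rewrite Hcomp by auto. rewrite Hv by auto. apply He.
Qed.

Lemma H_inv_r E mul inv e (G : abelian_group_on E mul inv e) {X : Type} (H : R -> X -> X)
  (Hact : action E mul e H) eps x : E eps -> H eps (H (inv eps) x) = x.
Proof.
  intros Ee. pose proof G as G'.
  destruct G' as [E0 [Em [Ei [Ha [Hc [H1 Hv]]]]]].
  destruct Hact as [_ [Hcomp He]].
  rewrite Hcomp by auto. rewrite (g_mulrV E mul inv e G) by auto. apply He.
Qed.

Lemma Rmin_in (E : R -> Prop) a b : E a -> E b -> E (Rmin a b).
Proof. intros; unfold Rmin; destruct (Rle_dec a b); auto. Qed.

Lemma no_min E mul inv e (HE : R_group E mul inv e) :
  forall a, E a -> exists b, E b /\ b < a.
Proof.
  destruct HE as [Hnat [G [Hrg1 _]]].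
  pose proof G as G'.
  destruct G' as [Ee [Em [Ei [Ha [Hc [H1 Hv]]]]]].
  assert (Hd : exists d, E d /\ d < e).
  { assert (E1 : E (INR 1)) by (apply Hnat; auto).
    assert (E2 : E (INR 2)) by (apply Hnat; auto).
    assert (Hc' : exists c, E c /\ c <> e).
    { destruct (Req_dec (INR 1) e) as [Heq|Hne].
      - exists (INR 2). split; auto. rewrite <- Heq. simpl. lra.
      - exists (INR 1). auto. }
    destruct Hc' as [c [Ec Hce]].
    destruct (Rtotal_order c e) as [Hlt|[Heq|Hgt]].
    - exists c; auto.
    - contradiction.
    - exists (inv c). split; auto. apply Rnot_le_lt. intro Hle.
      pose proof (Hrg1 e (inv c) c Ee (Ei c Ec) Ec Hle) as Hh.
      rewrite H1, Hv in Hh by auto. lra. }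
  destruct Hd as [d [Ed Hde]].
  intros a Ea. exists (mul d a). split; auto.
  pose proof (Hrg1 d e a Ed Ee Ea (Rlt_le _ _ Hde)) as Hh. rewrite H1 in Hh by auto.
  destruct Hh as [Hlt|Heq]; auto. exfalso.
  assert (d = e).
  { transitivity (mul (mul d a) (inv a)).
    - rewrite Ha by auto. rewrite (g_mulrV E mul inv e G) by auto.
      symmetry; apply (g_mulr1 E mul inv e G); auto.
    - rewrite Heq. apply (g_mulrV E mul inv e G); auto. }
  lra.
Qed.

Lemma coinitial (E : R -> Prop) (e : R) (Ee : E e)
  (Hnm : forall a, E a -> exists b, E b /\ b < a) :
  exists b : nat -> R, (forall n, E (b n)) /\ forall a, E a -> exists n, b n <= a.
Proof.
  destruct (classic (forall n : nat, exists x, E x /\ x <= - INR n)) as [Hall|Hnall].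
  - set (bf := fun n => proj1_sig (constructive_indefinite_description _ (Hall n))).
    assert (Hbf : forall n, E (bf n) /\ bf n <= - INR n).
    { intros n. unfold bf. exact (proj2_sig (constructive_indefinite_description _ (Hall n))). }
    exists bf. split.
    + intros n. apply Hbf.
    + intros a Ea. destruct (INR_unbounded (- a)) as [n Hn]. exists n.
      destruct (Hbf n) as [_ Hx]. lra.
  - apply not_all_ex_not in Hnall. destruct Hnall as [n0 Hn0].
    assert (Hlb : forall x, E x -> - INR n0 < x).
    { intros x Ex. apply Rnot_le_lt. intro. apply Hn0. exists x; auto. }
    set (S := fun y => E (- y)).
    assert (HSb : bound S).
    { exists (INR n0). intros y Sy. unfold S in Sy. specialize (Hlb _ Sy). lra. }
    assert (HSn : exists y, S y). { exists (- e). unfold S. rewrite Ropp_involutive; auto. }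
    destruct (completeness S HSb HSn) as [m' [Hub Hleast]].
    assert (Hk : forall k : nat, exists x, E x /\ x < - m' + / (INR k + 1)).
    { intros k. assert (Hp : 0 < / (INR k + 1)).
      { apply Rinv_0_lt_compat. pose proof (pos_INR k). lra. }
      apply NNPP; intro Hn.
      assert (m' <= m' - / (INR k + 1)); [|lra].
      apply Hleast. intros y Sy. unfold S in Sy.
      apply Rnot_lt_le. intro Hlt. apply Hn. exists (- y). split; auto. lra. }
    set (bf := fun k => proj1_sig (constructive_indefinite_description _ (Hk k))).
    assert (Hbf : forall k, E (bf k) /\ bf k < - m' + / (INR k + 1)).
    { intros k. unfold bf. exact (proj2_sig (constructive_indefinite_description _ (Hk k))). }
    exists bf. split.
    + intros k. apply Hbf.
    + intros a Ea. destruct (Hnm a Ea) as [b [Eb Hba]].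
      assert (Hm : - m' <= b).
      { assert (Sb : S (- b)) by (unfold S; rewrite Ropp_involutive; auto).
        specialize (Hub _ Sb). lra. }
      destruct (INR_unbounded (/ (a + m'))) as [k Hk'].
      exists k. destruct (Hbf k) as [_ Hx].
      assert (Hpos : 0 < a + m') by lra.
      assert (/ (INR k + 1) < a + m').
      { rewrite <- (Rinv_inv (a + m')).
        apply Rinv_lt_contravar.
        - apply Rmult_lt_0_compat; [apply Rinv_0_lt_compat; auto|]. pose proof (pos_INR k); lra.
        - lra. }
      lra.
Qed.

Lemma alpha_list (E : R -> Prop) (inv : R -> R) (e : R) (Ee : E e) {X : Type}
  (H : R -> X -> X) (V : X -> Prop) :
  forall l : list (X -> Prop),
  (forall W, In W l -> exists al, E al /\ forall eps, E eps -> eps <= al ->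
       forall y, W y -> V (H (inv eps) y)) ->
  exists al, E al /\ forall W, In W l -> forall eps, E eps -> eps <= al ->
       forall y, W y -> V (H (inv eps) y).
Proof.
  induction l as [|W l IH]; intros Hl.
  - exists e. split; auto. intros W [].
  - destruct IH as [al [Eal Hal]]. { intros W' HW'; apply Hl; right; auto. }
    destruct (Hl W (or_introl eq_refl)) as [al0 [Eal0 Hal0]].
    exists (Rmin al0 al). split; [apply Rmin_in; auto|].
    pose proof (Rmin_l al0 al). pose proof (Rmin_r al0 al).
    intros W' [<-|HW'] eps Eeps Hle y Wy.
    + apply Hal0; auto; lra.
    + apply (Hal W'); auto; lra.
Qed.

Lemma alpha_compact (E : R -> Prop) (inv : R -> R) (e : R) (Ee : E e) {X : Type}
  (open : (X -> Prop) -> Prop) (H : R -> X -> X) (omega : X)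
  (Habs : ABS E inv open H omega) (K V : X -> Prop) :
  compact_in open K -> nbhd open omega V ->
  exists al, E al /\ forall eps, E eps -> eps <= al -> forall y, K y -> V (H (inv eps) y).
Proof.
  intros HK HV.
  set (F := fun W => open W /\ exists al, E al /\ forall eps, E eps -> eps <= al ->
       forall y, W y -> V (H (inv eps) y)).
  destruct (HK F) as [l [Hl Hcov]].
  - intros W [HW _]; auto.
  - intros x Kx. destruct (Habs V x HV) as [U [al [[O [HO [Ox HOU]]] [Eal Hal]]]].
    exists O. split; [|exact Ox]. split; [exact HO|]. exists al; split; [exact Eal|].
    intros eps Eeps Hle y Oy. apply Hal; auto.
  - destruct (alpha_list E inv e Ee H V l) as [al [Eal Hal]].
    { intros W HW. destruct (Hl W HW) as [_ HH]; auto. }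
    exists al. split; auto. intros eps Eeps Hle y Ky.
    destruct (Hcov y Ky) as [W [HW Wy]]. apply (Hal W HW); auto.
Qed.

Lemma omega_fixed E mul inv e (HE : R_group E mul inv e)
  (X : Type) (open : (X -> Prop) -> Prop)
  (Htop : is_topology open) (Hhaus : hausdorff open)
  (H : R -> X -> X) (Hact : action E mul e H)
  (Hcont : continuous_action E open H)
  (omega : X) (Habs : ABS E inv open H omega) :
  forall b, E b -> H b omega = omega.
Proof.
  destruct HE as [_ [G [Hrg1 _]]].
  pose proof G as G'.
  destruct G' as [Ee [Em [Ei [Ha [Hc [H1 Hv]]]]]].
  intros b Eb. apply NNPP; intro Hne.
  destruct (Hhaus omega (H b omega)) as [P [Q [HP [HQ [Pw [Qy HPQ]]]]]]; [auto|].
  set (V := fun z => P z /\ Q (H b z)).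
  assert (HVo : open V).
  { pose proof (preimage_open E open Htop H Hcont b Q Eb HQ). destruct Htop as [_ [Hi _]]. apply Hi; auto. }
  destruct (Habs V omega) as [U [al [[O [HO [Ow HOU]]] [Eal Hal]]]].
  { exists V; split; auto. split; [split; auto|auto]. }
  set (eps := Rmin al (mul al b)).
  assert (Eeps : E eps) by (apply Rmin_in; auto).
  assert (Hle1 : eps <= al) by apply Rmin_l.
  assert (Hle2 : eps <= mul al b) by apply Rmin_r.
  set (eps2 := mul eps (inv b)).
  assert (Eeps2 : E eps2) by (unfold eps2; auto).
  assert (Hle3 : eps2 <= al).
  { pose proof (Hrg1 eps (mul al b) (inv b) Eeps (Em _ _ Eal Eb) (Ei _ Eb) Hle2) as Hh.
    rewrite Ha, (g_mulrV E mul inv e G), (g_mulr1 E mul inv e G) in Hh by auto.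
    exact Hh. }
  destruct (Hal eps Eeps Hle1 omega (HOU _ Ow)) as [_ HQz].
  destruct (Hal eps2 Eeps2 Hle3 omega (HOU _ Ow)) as [HPz _].
  apply (HPQ (H b (H (inv eps) omega))). split; auto.
  destruct Hact as [_ [Hcomp _]].
  rewrite Hcomp by auto.
  replace (mul b (inv eps)) with (inv eps2); auto.
  unfold eps2. rewrite (g_invM E mul inv e G), (g_invK E mul inv e G) by auto.
  apply Hc; auto.
Qed.

Theorem corollary2p4
  (E : R -> Prop) (mul : R -> R -> R) (inv : R -> R) (e : R)
  (HE : R_group E mul inv e)
  (X : Type) (open : (X -> Prop) -> Prop)
  (Htop : is_topology open) (Hhaus : hausdorff open) (Hlc : locally_compact open)
  (Hnt : exists x y : X, x <> y)
  (H : R -> X -> X) (Hact : action E mul e H)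
  (Hcont : continuous_action E open H)
  (omega : X) (Habs : ABS E inv open H omega) :
  (exists T : nat -> (X -> Prop),
     (forall n, compact_in open (T n) /\ elementary E inv e open H omega (T n)) /\
     (forall V, nbhd open omega V -> exists n, forall x, T n x -> V x)) /\
  (exists T : nat -> (X -> Prop),
     (forall n, open (T n) /\ elementary E inv e open H omega (T n)) /\
     (forall V, nbhd open omega V -> exists n, forall x, T n x -> V x)).
Proof.
  pose proof (omega_fixed E mul inv e HE X open Htop Hhaus H Hact Hcont omega Habs) as Hfix.
  pose proof (no_min E mul inv e HE) as Hnm.
  pose proof HE as HE'.
  destruct HE' as [_ [G [Hrg1 _]]].
  pose proof G as G'.
  destruct G' as [Ee [Em [Ei [Ha [Hc [H1 Hv]]]]]].
  pose proof Hact as Hact'. destruct Hact' as [_ [Hcomp He]].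
  destruct (Hlc omega) as [K [HKc [K' [HK'o [HK'w HK'K]]]]].
  assert (HVK : nbhd open omega K) by (exists K'; auto).
  destruct (Habs K omega HVK) as [U [al [[U' [HU'o [HU'w HU'U]]] [Eal Hal]]]].
  set (al' := Rmin al e).
  assert (Eal' : E al') by (apply Rmin_in; auto).
  assert (Hal'1 : al' <= al) by apply Rmin_l.
  assert (Hal'2 : al' <= e) by apply Rmin_r.
  set (T0 := fun x => exists eps, E eps /\ eps <= al' /\ U' (H eps x)).
  assert (T0o : open T0).
  { apply open_union; auto. intros x [eps [Eeps [Hle Hu]]].
    exists (fun z => U' (H eps z)). split; [apply (preimage_open E); auto|].
    split; auto. intros z Hz. exists eps; auto. }
  assert (T0K : forall x, T0 x -> K x).
  { intros x [eps [Eeps [Hle Hu]]].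
    rewrite <- (H_inv_l E mul inv e G H Hact eps x) by auto.
    apply Hal; auto; lra. }
  assert (T0b : balanced E inv e H T0).
  { intros d Ed Hde x [eps [Eeps [Hle Hu]]].
    exists (mul eps d). split; auto. split.
    - pose proof (Hrg1 d e eps Ed Ee Eeps Hde) as Hh. rewrite H1 in Hh by auto.
      rewrite Hc by auto. lra.
    - rewrite Hcomp by auto. rewrite Ha by auto.
      rewrite (g_mulrV E mul inv e G), (g_mulr1 E mul inv e G) by auto. auto. }
  assert (T0w : T0 omega).
  { exists al'. split; auto. split; [lra|]. rewrite Hfix; auto. }
  assert (clK : forall x, closure open T0 x -> K x).
  { intros x Hx. apply (compact_closed open Htop Hhaus K HKc).
    apply (closure_mono open T0); auto. }
  destruct (coinitial E e Ee Hnm) as [b [Eb Hb]].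
  set (a := fun n => Rmin (b n) e).
  assert (Ea : forall n, E (a n)) by (intros; apply Rmin_in; auto).
  assert (Hae : forall n, a n <= e) by (intros; apply Rmin_r).
  assert (Hab : forall n, a n <= b n) by (intros; apply Rmin_l).
  set (O := fun n x => T0 (H (a n) x)).
  assert (Oo : forall n, open (O n)) by (intros; apply (preimage_open E); auto).
  assert (Ob : forall n, balanced E inv e H (O n)).
  { intros n d Ed Hde x Ox. unfold O.
    replace (H (a n) (H (inv d) x)) with (H (inv d) (H (a n) x)); [apply T0b; auto|].
    rewrite !Hcomp by auto. rewrite Hc by auto. reflexivity. }
  assert (Ow : forall n, O n omega) by (intros; unfold O; rewrite Hfix; auto).
  assert (OT0 : forall n x, O n x -> T0 x).
  { intros n x Ox. rewrite <- (H_inv_l E mul inv e G H Hact (a n) x) by auto.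
    apply T0b; auto. }
  assert (clOK : forall n x, closure open (O n) x -> K x).
  { intros n x Hx. apply clK. apply (closure_mono open (O n)); [intros y; apply OT0 | exact Hx]. }
  assert (Base : forall V, nbhd open omega V -> exists n, forall x, closure open (O n) x -> V x).
  { intros V HV.
    destruct (alpha_compact E inv e Ee open H omega Habs K V HKc HV) as [be [Ebe Hbe]].
    destruct (Hb be Ebe) as [n Hn]. exists n. intros x Hx.
    rewrite <- (H_inv_l E mul inv e G H Hact (a n) x) by auto.
    apply Hbe; auto. { specialize (Hab n). lra. }
    apply clK. apply (closure_pre E open Htop H Hcont); auto. }
  split.
  - exists (fun n => closure open (O n)). split.
    + intros n. split.
      * apply (closure_sub_compact open Htop K); auto. apply clOK.
      * split; [|split].
        -- apply (closure_balanced E); auto.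
        -- apply (closure_sub_compact open Htop K); auto.
           intros x Hx. apply (clOK n). apply closure_closure; auto.
        -- exists (O n). split; auto. split; auto. intros; apply closure_incl; auto.
    + exact Base.
  - exists O. split.
    + intros n. split; auto. split; [|split]; auto.
      * apply (closure_sub_compact open Htop K); auto. apply clOK.
      * exists (O n); auto.
    + intros V HV. destruct (Base V HV) as [n Hn]. exists n. intros x Ox.
      apply Hn. apply closure_incl; auto.
Qed.
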